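(* There exists a universal constant $K>0$ such that the following holds. Let $n\ge 1$, $\mu_0\in\mathbb R^n$, $\sigma_0>0$, $\epsilon\in(0,\sigma_0)$, and let $(\mu_1,\sigma_1)\in\mathbb R^n\times(0,\infty)$ satisfy $d((\mu_1,\sigma_1),(\mu_0,\sigma_0))\ge \epsilon$. Then there exists a measurable test $\varphi_n:\mathbb R^n\to\{0,1\}$ such that $$\mathbb E_{\mu_0,\sigma_0}\varphi_n\le e^{-Kn\epsilon^2/\sigma_0^2},\qquad \sup_{(\mu,\sigma)\in\mathbb R^n\times(0,\infty):\ d((\mu,\sigma),(\mu_1,\sigma_1))\le \epsilon/6}\mathbb E_{\mu,\sigma}(1-\varphi_n)\le e^{-Kn\epsilon^2/\sigma_0^2}.$$
   Context: For $\mu\in\mathbb R^n$ and $\sigma>0$, $P_{\mu,\sigma}$ denotes the Gaussian distribution $\mathrm N_n(\mu,\sigma^2 I_n)$ of the observation $y\in\mathbb R^n$ and $\mathbb E_{\mu,\sigma}$ the expectation under it. $\lVert\cdot\rVert_2$ is the Euclidean norm. The metric $d$ on $\mathbb R^n\times(0,\infty)$ is defined by $d^2((\mu_1,\sigma_1),(\mu_2,\sigma_2))=n^{-1}\lVert\mu_1-\mu_2\rVert_2^2+|\sigma_1-\sigma_2|^2$. The constant $K$ does not depend on $n,\epsilon,\mu_0,\sigma_0,\mu_1,\sigma_1$. *)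

(* Defs.v *)
From HB Require Import structures.
From mathcomp Require Import all_boot all_order all_algebra.
From mathcomp Require Import all_classical all_reals all_analysis.
Set Implicit Arguments. Unset Strict Implicit. Unset Printing Implicit Defensive.
Import Order.TTheory GRing.Theory Num.Theory.
Local Open Scope classical_set_scope.
Local Open Scope ring_scope.

(* Points of R^n are n-tuples (the library equips n.-tuple R with the
   product sigma-algebra of the Borel sigma-algebras). *)

(* Expectation of a (nonnegative) function phi of y ~ N_n(mu, sigma^2 I_n),
   as the iterated integral against the n independent one-dimensional
   normal laws N(mu_i, sigma^2) (normal_prob m s has standard deviation s).
   By Tonelli this is the integral w.r.t. the product measure. *)
Fixpoint gauss_expect {R : realType} (n : nat) :
  n.-tuple R -> R -> (n.-tuple R -> \bar R) -> \bar R :=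
  match n return n.-tuple R -> R -> (n.-tuple R -> \bar R) -> \bar R with
  | 0 => fun _ _ phi => phi [tuple]
  | m.+1 => fun mu sigma phi =>
      (\int[normal_prob (thead mu) sigma]_x
         gauss_expect [tuple of behead mu] sigma
           (fun t : m.-tuple R => phi [tuple of x :: t]))%E
  end.

Definition dist_ms {R : realType} (n : nat) (mu1 : n.-tuple R) (s1 : R)
  (mu2 : n.-tuple R) (s2 : R) : R :=
  Num.sqrt ((n%:R)^-1 * \sum_(i < n) (tnth mu1 i - tnth mu2 i) ^+ 2
            + (s1 - s2) ^+ 2).

(* Main.v *)
Require Import Defs.
From HB Require Import structures.
From mathcomp Require Import all_boot all_order all_algebra.
From mathcomp Require Import all_classical all_reals all_analysis.
From mathcomp Require Import measurable_realfun.
From mathcomp Require Import ring lra.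
Import Order.TTheory GRing.Theory Num.Theory.
Local Open Scope classical_set_scope.
Local Open Scope ring_scope.
Section P1.
Context {R : realType}.
Local Notation leb := (@lebesgue_measure R).

Lemma normal_change (m s : R) (f : R -> R) :
  (forall x, 0 <= f x) -> measurable_fun setT f ->
  (\int[normal_prob m s]_x (f x)%:E = \int[leb]_x ((f x * normal_pdf m s x)%:E))%E.
Proof.
move=> f0 mf.
have numu : normal_prob m s `<< leb by apply: normal_prob_dominates.
have mEf : measurable_fun setT (fun x => (f x)%:E) by apply/measurable_EFinP.
rewrite -(@Radon_Nikodym_SigmaFinite.change_of_variables _ _ R (normal_prob m s) leb numu (fun x => (f x)%:E)) //.
apply: ae_eq_integral => //.
- apply: emeasurable_funM; first exact: mEf.
  exact: measurable_int (Radon_Nikodym_SigmaFinite.f_integrable _).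
- apply/measurable_EFinP; apply: measurable_funM => //.
  exact: measurable_normal_pdf.
- under [X in ae_eq _ _ _ X]eq_fun do rewrite EFinM.
  apply: ae_eqe_mul2l.
  apply: integral_ae_eq => //.
  + exact: Radon_Nikodym_SigmaFinite.f_integrable.
  + by apply/measurable_EFinP; exact: measurable_normal_pdf.
  + move=> E _ mE; rewrite -Radon_Nikodym_SigmaFinite.f_integral //.
Qed.
End P1.
Section P2.
Context {R : realType}.
Local Notation leb := (@lebesgue_measure R).

Lemma integral_normal_fun_pos (m s : R) : s != 0 ->
  (\int[leb]_x (normal_fun m s x)%:E = (normal_peak s)^-1%:E)%E.
Proof.
move=> s0.
have := integral_normal_pdf m s.
rewrite normal_pdfE //.
under eq_integral do rewrite EFinM.
have H1 : forall x, [set: R] x -> (0 <= (normal_fun m s x)%:E)%E.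
  by move=> x _; rewrite lee_fin normal_fun_ge0.
have H2 : measurable_fun [set: R] (fun x => (normal_fun m s x)%:E).
  by apply/measurable_EFinP; exact: measurable_normal_fun.
have /= HH := @ge0_integralZl_EFin _ _ _ leb setT measurableT _ H1 H2 _ (normal_peak_ge0 s); rewrite HH.
have pk0 := normal_peak_gt0 s0.
case: (\int[leb]_x _)%E => [r| |] /=.
- rewrite -EFinM => /eqP; rewrite eqe => /eqP h.
  congr EFin; apply: (@mulfI _ (normal_peak s)); first by rewrite gt_eqF.
  by rewrite h divff // gt_eqF.
- by rewrite gt0_muley ?lte_fin.
- by rewrite gt0_muleNy ?lte_fin.
Qed.

Definition mgf (a b d s : R) : R :=
  (Num.sqrt (1 - 2 * a * s ^+ 2))^-1 *
  expR (((d + b * s ^+ 2) ^+ 2 / (1 - 2 * a * s ^+ 2) - d ^+ 2) / (2 * s ^+ 2)).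

Lemma mgf_normal (m s c a b : R) : 0 < s -> 0 < 1 - 2 * a * s ^+ 2 ->
  (\int[normal_prob m s]_x (expR (a * (x - c) ^+ 2 + b * (x - c)))%:E
    = (mgf a b (m - c) s)%:E)%E.
Proof.
move=> s0 r0.
set r := 1 - 2 * a * s ^+ 2.
rewrite normal_change; last 2 first.
- by move=> x; exact: expR_ge0.
- apply: measurableT_comp => //; apply: measurable_funD => //.
  + apply: measurable_funM => //; apply: measurable_funX; exact: measurable_funB.
  + apply: measurable_funM => //; exact: measurable_funB.
rewrite normal_pdfE ?gt_eqF //.
set d := m - c.
set m' := c + (d + b * s ^+ 2) / r.
set s' := s / Num.sqrt r.
set E := expR (((d + b * s ^+ 2) ^+ 2 / r - d ^+ 2) / (2 * s ^+ 2)).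
have sr0 : 0 < Num.sqrt r by rewrite sqrtr_gt0.
have s'0 : s' != 0 by rewrite gt_eqF // divr_gt0.
have s'2 : s' ^+ 2 = s ^+ 2 / r by rewrite /s' expr_div_n sqr_sqrtr // ltW.
transitivity (\int[leb]_x ((normal_peak s * E)%:E * (normal_fun m' s' x)%:E))%E.
  apply: eq_integral => x _; rewrite -EFinM; congr EFin.
  rewrite /normal_fun /E mulrCA -expRD -mulrA -expRD.
  congr (_ * expR _).
  rewrite s'2 /m' /d -/r.
  have rn0 : r != 0 by rewrite gt_eqF.
  have sn0 : s != 0 by rewrite gt_eqF.
  rewrite /r. field.
  by rewrite rn0 sn0.
have H1 : forall x, [set: R] x -> (0 <= (normal_fun m' s' x)%:E)%E.
  by move=> x _; rewrite lee_fin normal_fun_ge0.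
have H2 : measurable_fun [set: R] (fun x => (normal_fun m' s' x)%:E).
  by apply/measurable_EFinP; exact: measurable_normal_fun.
have H3 : 0 <= normal_peak s * E by rewrite mulr_ge0 ?normal_peak_ge0 ?expR_ge0.
have /= HH := @ge0_integralZl_EFin _ _ _ leb setT measurableT _ H1 H2 _ H3; rewrite HH.
rewrite integral_normal_fun_pos // -EFinM; congr EFin.
rewrite /mgf -/r -/d -/E mulrC mulrA; congr (_ * _).
rewrite /normal_peak invrK s'2.
have rn0 : r != 0 by rewrite gt_eqF.
have hp : 0 < s ^+ 2 * pi *+ 2 by rewrite mulrn_wgt0 // mulr_gt0 ?pi_gt0 // exprn_gt0.
rewrite (_ : s ^+ 2 / r * pi *+ 2 = (s ^+ 2 * pi *+ 2) * r^-1); last first.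
  by rewrite mulrAC mulrnAl.
rewrite sqrtrM ?ltW // sqrtrV ?ltW // mulrAC divff ?mul1r //.
by rewrite gt_eqF // sqrtr_gt0.
Qed.
End P2.
Section P3.
Context {R : realType}.

Lemma le_integral_nm d (T : measurableType d) (mu : {measure set T -> \bar R})
  (F G : T -> \bar R) : (forall x, (0 <= F x)%E) -> (forall x, (F x <= G x)%E) ->
  (\int[mu]_x F x <= \int[mu]_x G x)%E.
Proof.
move=> F0 FG.
have G0 : forall x, (0 <= G x)%E by move=> x; exact: le_trans (F0 x) (FG x).
rewrite !ge0_integralTE //; apply: ereal_sup_le => _ [h hF <-].
by exists h => // x; exact: le_trans (hF x) (FG x).
Qed.

Lemma gauss_expect_ge0 n (mu : n.-tuple R) s (phi : n.-tuple R -> \bar R) :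
  (forall y, (0 <= phi y)%E) -> (0 <= gauss_expect mu s phi)%E.
Proof.
elim: n mu phi => [|n IH] mu phi phi0 /=; first exact: phi0.
by apply: integral_ge0 => x _; apply: IH.
Qed.

Lemma gauss_expect_le n (mu : n.-tuple R) s (phi psi : n.-tuple R -> \bar R) :
  (forall y, (0 <= phi y)%E) -> (forall y, (phi y <= psi y)%E) ->
  (gauss_expect mu s phi <= gauss_expect mu s psi)%E.
Proof.
elim: n mu phi psi => [|n IH] mu phi psi phi0 le /=; first exact: le.
apply: le_integral_nm => x; first by apply: gauss_expect_ge0.
by apply: IH.
Qed.

Lemma gauss_prod n (mu : n.-tuple R) s (f : nat -> R -> R) (c : nat -> R) (k : R) :
  0 <= k -> (forall i x, 0 <= f i x) -> (forall i, measurable_fun setT (f i)) ->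
  (forall i : 'I_n, \int[normal_prob (tnth mu i) s]_x (f i x)%:E = (c i)%:E)%E ->
  gauss_expect mu s (fun y => (k * \prod_(i < n) f i (tnth y i))%:E)
    = (k * \prod_(i < n) c i)%:E.
Proof.
elim: n mu f c k => [|n IH] mu f c k k0 f0 mf hc /=.
  by rewrite !big_ord0.
transitivity (\int[normal_prob (thead mu) s]_x
   ((k * \prod_(i < n) c i.+1)%:E * (f 0%N x)%:E))%E.
  apply: eq_integral => x _.
  under [X in gauss_expect _ _ X = _]eq_fun => t.
    rewrite big_ord_recl.
    under eq_bigr => i _ do rewrite tnthS.
    rewrite (_ : tnth [tuple of x :: t] ord0 = x) //.
    rewrite mulrA.
    over.
  rewrite /=.
  rewrite (IH _ (fun i => f i.+1) (fun i => c i.+1) (k * f 0%N x)) //.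
  - by rewrite -EFinM; congr EFin; ring.
  - by rewrite mulr_ge0.
  - move=> i; rewrite tnth_behead.
    have := hc (inord i.+1); rewrite inordK //; last by rewrite ltnS.
have H1 : forall x, [set: R] x -> (0 <= (f 0%N x)%:E)%E.
  by move=> x _; rewrite lee_fin.
have H2 : measurable_fun [set: R] (fun x => (f 0%N x)%:E).
  by apply/measurable_EFinP.
have H3 : 0 <= k * \prod_(i < n) c i.+1.
  apply: mulr_ge0 => //; apply: prodr_ge0 => i _.
  have := hc (lift ord0 i); rewrite /= => hci.
  have : (0 <= (c (bump 0 i))%:E)%E.
    by rewrite -hci; apply: integral_ge0 => x _; rewrite lee_fin.
  by rewrite lee_fin.
have /= HH := @ge0_integralZl_EFin _ _ _ (normal_prob (thead mu) s) setT measurableT _ H1 H2 _ H3.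
rewrite HH (hc ord0) -EFinM big_ord_recl; congr EFin; ring.
Qed.
End P3.
Section P4.
Context {R : realType}.

Definition stat n (k : R) (v c : n.-tuple R) (y : n.-tuple R) : R :=
  \sum_(i < n) (k * (tnth y i - tnth c i) ^+ 2 + tnth v i * (tnth y i - tnth c i)).


Arguments stat {n}.

Definition ind n (k : R) (v c : n.-tuple R) (T : R) (y : n.-tuple R) : R :=
  if T < stat k v c y then 1 else 0.
Arguments ind {n}.

Lemma measurable_stat n k (v c : n.-tuple R) : measurable_fun setT (stat k v c).
Proof.
rewrite /stat; apply: measurable_sum => i.
apply: measurable_funD.
- apply: measurable_funM => //; apply: measurable_funX; apply: measurable_funB => //.
  exact: measurable_tnth.
- apply: measurable_funM => //; apply: measurable_funB => //; exact: measurable_tnth.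
Qed.

Lemma measurable_ind n k (v c : n.-tuple R) T : measurable_fun setT (ind k v c T).
Proof.
rewrite /ind; apply: measurable_fun_ifT => //.
apply: measurable_fun_ltr => //; exact: measurable_stat.
Qed.

Lemma chernoff n (mu c v : n.-tuple R) s k l T (phi : n.-tuple R -> R) :
  0 < s -> 0 < 1 - 2 * (l * k) * s ^+ 2 -> (forall y, 0 <= phi y) ->
  (forall y, phi y <= expR (l * stat k v c y - T)) ->
  (gauss_expect mu s (fun y => (phi y)%:E) <=
   (expR (- T) * \prod_(i < n) mgf (l * k) (l * tnth v i) (tnth mu i - tnth c i) s)%:E)%E.
Proof.
move=> s0 r0 phi0 hphi.
pose f i x := expR (l * k * (x - nth 0 c i) ^+ 2 + l * nth 0 v i * (x - nth 0 c i)).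
apply: (@le_trans _ _ (gauss_expect mu s
   (fun y => (expR (- T) * \prod_(i < n) f i (tnth y i))%:E))).
  apply: gauss_expect_le => y; first by rewrite lee_fin.
  rewrite lee_fin (le_trans (hphi y)) // le_eqVlt; apply/orP; left; apply/eqP.
  rewrite addrC expRD; congr (_ * _).
  rewrite /stat mulr_sumr expR_sum; apply: eq_bigr => i _.
  by rewrite /f !(tnth_nth 0); congr expR; ring.
rewrite (@gauss_prod _ n mu s f (fun i => mgf (l * k) (l * nth 0 v i) (nth 0 mu i - nth 0 c i) s) (expR (- T))).
- rewrite (eq_bigr (fun i : 'I_n => mgf (l * k) (l * tnth v i) (tnth mu i - tnth c i) s)) //.
  by move=> i _; rewrite !(tnth_nth 0).
- exact: expR_ge0.
- by move=> i x; exact: expR_ge0.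
- move=> i; rewrite /f; apply: measurableT_comp => //; apply: measurable_funD => //.
  + apply: measurable_funM => //; apply: measurable_funX; exact: measurable_funB.
  + apply: measurable_funM => //; exact: measurable_funB.
- move=> i; rewrite /f.
  by rewrite (@mgf_normal R (tnth mu i) s c`_i (l * k) (l * v`_i) s0 r0) (tnth_nth 0).
Qed.

End P4.
Arguments stat {R n}.
Arguments ind {R n}.
Section P5.
Context {R : realType}.

Lemma sqrt_inv_le (r : R) : 0 < r -> (Num.sqrt r)^-1 <= expR ((1 - r) / (2 * r)).
Proof.
move=> r0.
have h1 : r^-1 <= expR ((1 - r) / r).
  apply: le_trans (expR_ge1Dx _); rewrite le_eqVlt; apply/orP; left; apply/eqP.
  by field; rewrite gt_eqF.
rewrite -(sqrtrV (ltW r0)).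
have -> : expR ((1 - r) / (2 * r)) = Num.sqrt (expR ((1 - r) / r)).
  have -> : expR ((1 - r) / r) = expR ((1 - r) / (2 * r)) ^+ 2.
    by rewrite -expRM_natr; congr expR; field; rewrite gt_eqF.
  by rewrite sqrtr_sqr ger0_norm ?expR_ge0.
by rewrite ler_sqrt // expR_gt0.
Qed.

Lemma mgf_b0 (a d s : R) : 0 < s -> 0 < 1 - 2 * a * s ^+ 2 ->
  mgf a 0 d s <= expR (a * s ^+ 2 / (1 - 2 * a * s ^+ 2) + a * d ^+ 2 / (1 - 2 * a * s ^+ 2)).
Proof.
move=> s0 r0; rewrite /mgf expRD.
apply: ler_pM; [by rewrite invr_ge0 sqrtr_ge0 | exact: expR_ge0 | |].
- have h := sqrt_inv_le _ r0.
  rewrite (_ : (1 - (1 - 2 * a * s ^+ 2)) / (2 * (1 - 2 * a * s ^+ 2)) = a * s ^+ 2 / (1 - 2 * a * s ^+ 2)) in h => //.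
  by field; rewrite gt_eqF.
- rewrite ler_expR mul0r addr0 le_eqVlt; apply/orP; left; apply/eqP.
  by field; rewrite !gt_eqF // exprn_gt0.
Qed.

Lemma mgf_a0 (b d s : R) : 0 < s ->
  mgf 0 b d s = expR (b * d + b ^+ 2 * s ^+ 2 / 2).
Proof.
move=> s0; rewrite /mgf !mulr0 mul0r subr0 sqrtr1 invr1 mul1r.
by congr expR; field; rewrite gt_eqF.
Qed.

End P5.
Section P6.
Context {R : realType}.

Lemma fin_exp n (M q : 'I_n -> R) T B :
  (forall i, 0 <= M i) -> (forall i, M i <= expR (q i)) ->
  - T + \sum_(i < n) q i <= B ->
  expR (- T) * \prod_(i < n) M i <= expR B.
Proof.
move=> M0 Mq hB.
apply: le_trans (_ : expR (- T) * \prod_(i < n) expR (q i) <= _).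
  apply: ler_wpM2l; first exact: expR_ge0.
  by apply: ler_prod => i _; rewrite M0 Mq.
by rewrite -expR_sum -expRD ler_expR.
Qed.

Lemma ind_le n k (v c : n.-tuple R) T l y : 0 <= l ->
  ind k v c T y <= expR (l * stat k v c y - l * T).
Proof.
move=> l0; rewrite /ind; case: ifP => h; last exact: expR_ge0.
apply: le_trans (expR_ge1Dx _); rewrite lerDl -mulrBr mulr_ge0 // subr_ge0 ltW //.
Qed.

Lemma indc_le n k (v c : n.-tuple R) T l y : 0 <= l ->
  1 - ind k v c T y <= expR ((- l) * stat k v c y - (- l * T)).
Proof.
move=> l0; rewrite /ind; case: ifP => h; first by rewrite subrr expR_ge0.
apply: le_trans (expR_ge1Dx _); rewrite subr0 lerDl.
rewrite (_ : _ - _ = l * (T - stat k v c y)); last by ring.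
by rewrite mulr_ge0 // subr_ge0 leNgt h.
Qed.

Lemma ind01 n k (v c : n.-tuple R) T y : ind k v c T y = 0 \/ ind k v c T y = 1.
Proof. by rewrite /ind; case: ifP; [right|left]. Qed.

Lemma ind_ge0 n k (v c : n.-tuple R) T y : 0 <= ind k v c T y.
Proof. by rewrite /ind; case: ifP. Qed.

Lemma ind_le1 n k (v c : n.-tuple R) T y : ind k v c T y <= 1.
Proof. by rewrite /ind; case: ifP. Qed.

Lemma sum_lin n (f g : 'I_n -> R) (al be ga : R) :
  \sum_(i < n) (al * f i + be * g i + ga) =
  al * \sum_(i < n) f i + be * \sum_(i < n) g i + ga * n%:R.
Proof.
rewrite !big_split /= -!mulr_sumr sumr_const card_ord.
by rewrite mulr_natr.
Qed.

Lemma sqrt_ge_sq (e x : R) : 0 < e -> e <= Num.sqrt x -> e ^+ 2 <= x.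
Proof.
move=> e0 h.
have x0 : 0 <= x.
  rewrite leNgt; apply/negP => hx.
  by move: h; rewrite ltr0_sqrtr // leNgt e0.
rewrite -(sqr_sqrtr x0) !expr2.
by apply: ler_pM => //; exact: ltW.
Qed.

Lemma sqrt_le_sq (e x : R) : 0 <= x -> Num.sqrt x <= e -> x <= e ^+ 2.
Proof.
move=> x0 h.
have e0 : 0 <= e by apply: le_trans h; exact: sqrtr_ge0.
rewrite -(sqr_sqrtr x0) !expr2.
by apply: ler_pM => //; exact: sqrtr_ge0.
Qed.

End P6.

Section P7.
Context {R : realType}.

Lemma mgf_ge0 (a b d s : R) : 0 <= mgf a b d s.
Proof. by rewrite /mgf mulr_ge0 ?expR_ge0 // invr_ge0 sqrtr_ge0. Qed.

Lemma sum_le_lin n (q f g : 'I_n -> R) (al be ga : R) :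
  (forall i, q i <= al * f i + be * g i + ga) ->
  \sum_(i < n) q i <= al * \sum_(i < n) f i + be * \sum_(i < n) g i + ga * n%:R.
Proof. by move=> h; rewrite -sum_lin; apply: ler_sum => i _; exact: h. Qed.

Lemma sumsq_ge0 n (f : 'I_n -> R) : 0 <= \sum_(i < n) f i ^+ 2.
Proof. by apply: sumr_ge0 => i _; exact: sqr_ge0. Qed.

Lemma alt_conv n (mu mu1 : n.-tuple R) (sig t a : R) : (1 <= n)%N ->
  dist_ms mu sig mu1 t <= a / 6 ->
  \sum_(i < n) (tnth mu i - tnth mu1 i) ^+ 2 <= n%:R * (a / 6) ^+ 2 /\
  (sig - t) ^+ 2 <= (a / 6) ^+ 2.
Proof.
move=> n1 h; have n0 : 0 < n%:R :> R by rewrite ltr0n.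
have W0 := sumsq_ge0 _ (fun i => tnth mu i - tnth mu1 i).
have x0 : 0 <= n%:R^-1 * \sum_(i < n) (tnth mu i - tnth mu1 i) ^+ 2 + (sig - t) ^+ 2.
  by rewrite addr_ge0 ?sqr_ge0 // mulr_ge0 // invr_ge0 ler0n.
have h2 := @sqrt_le_sq _ _ _ x0 h; split.
  have h3 : n%:R^-1 * \sum_(i < n) (tnth mu i - tnth mu1 i) ^+ 2 <= (a / 6) ^+ 2.
    by apply: le_trans h2; rewrite lerDl sqr_ge0.
  by rewrite -ler_pdivrMl // mulrC.
by apply: le_trans h2; rewrite lerDr mulr_ge0 // invr_ge0 ler0n.
Qed.

Lemma null_conv n (mu0 mu1 : n.-tuple R) (s t a : R) : (1 <= n)%N -> 0 < a ->
  a <= dist_ms mu1 t mu0 s ->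
  a ^+ 2 <= n%:R^-1 * \sum_(i < n) (tnth mu1 i - tnth mu0 i) ^+ 2 + (t - s) ^+ 2.
Proof. by move=> n1 a0 h; apply: (@sqrt_ge_sq _ _ _ a0 h). Qed.

End P7.
Section CA.
Context {R : realType}.

Lemma caseA n (mu0 mu1 : n.-tuple R) (s t a : R) :
  (1 <= n)%N -> 0 < s -> 0 < a -> a < s -> 0 < t ->
  a ^+ 2 <= n%:R^-1 * \sum_(i < n) (tnth mu1 i - tnth mu0 i) ^+ 2 + (t - s) ^+ 2 ->
  (t - s) ^+ 2 <= a ^+ 2 / 4 ->
  exists phi : n.-tuple R -> R,
    measurable_fun [set: n.-tuple R] phi /\
    (forall y, phi y = 0 \/ phi y = 1) /\
    (gauss_expect mu0 s (fun y => (phi y)%:E)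
       <= (expR (- (1/1000 * n%:R * a ^+ 2 / s ^+ 2)))%:E)%E /\
    (forall (mu : n.-tuple R) (sigma : R), 0 < sigma ->
       dist_ms mu sigma mu1 t <= a / 6 ->
       (gauss_expect mu sigma (fun y => (1 - phi y)%:E)
          <= (expR (- (1/1000 * n%:R * a ^+ 2 / s ^+ 2)))%:E)%E).
Proof.
move=> n1 s0 a0 as0 t0 hd hA.
have [V2 V2E] : exists V2, V2 = \sum_(i < n) (tnth mu1 i - tnth mu0 i) ^+ 2 by eexists.
rewrite -V2E in hd.
have n0 : 0 < n%:R :> R by rewrite ltr0n.
have V20 : 0 <= V2 by rewrite V2E; apply: sumsq_ge0.
have hV : 3/4 * n%:R * a ^+ 2 <= V2.
  have h1 : 3/4 * a ^+ 2 <= n%:R^-1 * V2 by lra.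
  have := ler_wpM2l (ltW n0) h1; rewrite mulVKf ?gt_eqF // => h2.
  lra.
set v := [tuple tnth mu1 i - tnth mu0 i | i < n].
have tv i : tnth v i = tnth mu1 i - tnth mu0 i by rewrite tnth_mktuple.
have [u uE] : exists u, u = (s ^+ 2)^-1 by eexists.
have s2 : 0 < s ^+ 2 by rewrite exprn_gt0.
have u0 : 0 < u by rewrite uE invr_gt0.
have hus : u ^+ 2 * s ^+ 2 = u by rewrite uE; field; rewrite gt_eqF.
have hK : 1/1000 * n%:R * a ^+ 2 / s ^+ 2 = 1/1000 * n%:R * a ^+ 2 * u by rewrite uE.
rewrite hK.
exists (ind 0 v mu0 (V2 / 2)); split; first exact: measurable_ind.
split; first by move=> y; exact: ind01.
split.
- pose l := u / 2.
  apply: le_trans (@chernoff R n mu0 mu0 v s 0 l (l * (V2 / 2)) _ s0 _ _ _) _.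
  + by rewrite mulr0 mulr0 mul0r subr0 ltr01.
  + by move=> y; exact: ind_ge0.
  + by move=> y; apply: ind_le; rewrite ltW // divr_gt0.
  rewrite lee_fin; apply: (@fin_exp R n _ (fun i => (l * tnth v i) * 0 + (l * tnth v i) ^+ 2 * s ^+ 2 / 2)).
  + by move=> i; exact: mgf_ge0.
  + by move=> i; rewrite mulr0 subrr mgf_a0.
  have hs := @sum_le_lin R n (fun i => (l * tnth v i) * 0 + (l * tnth v i) ^+ 2 * s ^+ 2 / 2) (fun i => tnth v i ^+ 2) (fun i => tnth v i ^+ 2) (l ^+ 2 * s ^+ 2 / 2) 0 0.
  apply: le_trans (lerD (lexx _) (hs _)) _.
    by move=> i; rewrite le_eqVlt; apply/orP; left; apply/eqP; ring.
  have -> : \sum_(i < n) tnth v i ^+ 2 = V2 by rewrite V2E; apply: eq_bigr => i _; rewrite tv.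
  rewrite /l.
  have -> : (u / 2) ^+ 2 * s ^+ 2 / 2 * V2 = u * V2 / 8.
    by rewrite -[in RHS]hus; field.
  have h : 0 <= u * (V2 - 3/4 * n%:R * a^+2) by rewrite mulr_ge0 ?subr_ge0 // ltW.
  have h2 : 0 <= u * n%:R * a^+2 by rewrite !mulr_ge0 ?sqr_ge0 // ltW.
  lra.
move=> mu sig sig0 hdist.
have [hW hst] := (@alt_conv R n mu mu1 sig t a n1 hdist).
have [W WE] : exists W, W = \sum_(i < n) (tnth mu i - tnth mu1 i) ^+ 2 by eexists.
rewrite -WE in hW.
have hsig : sig ^+ 2 <= 4 * s ^+ 2.
  have h1 : (sig - s) ^+ 2 <= 2 * (sig - t) ^+ 2 + 2 * (t - s) ^+ 2.
    have := sqr_ge0 (sig - 2 * t + s); lra.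
  have h2 : a ^+ 2 < s ^+ 2 by rewrite ltr_pXn2r // ?nnegrE ltW.
  have h3 : (sig - s) ^+ 2 < s ^+ 2 by lra.
  have h4 : sig < 2 * s by nra.
  nra.
pose l := u / 20.
have l0 : 0 <= l by rewrite /l divr_ge0 // ltW.
apply: le_trans (@chernoff R n mu mu0 v sig 0 (- l) (- l * (V2 / 2)) _ sig0 _ _ _) _.
+ by rewrite mulr0 mulr0 mul0r subr0 ltr01.
+ by move=> y; rewrite subr_ge0; exact: ind_le1.
+ by move=> y; apply: indc_le.
rewrite lee_fin; apply: (@fin_exp R n _ (fun i => (- l * tnth v i) * (tnth mu i - tnth mu0 i) + (- l * tnth v i) ^+ 2 * sig ^+ 2 / 2)).
+ by move=> i; exact: mgf_ge0.
+ by move=> i; rewrite mulr0 mgf_a0.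
have hs := @sum_le_lin R n (fun i => (- l * tnth v i) * (tnth mu i - tnth mu0 i) + (- l * tnth v i) ^+ 2 * sig ^+ 2 / 2) (fun i => tnth v i ^+ 2) (fun i => (tnth mu i - tnth mu1 i) ^+ 2) (- (3/4) * l + l ^+ 2 * sig ^+ 2 / 2) l 0.
apply: le_trans (lerD (lexx _) (hs _)) _.
  move=> i; rewrite tv.
  have -> : tnth mu i - tnth mu0 i = (tnth mu i - tnth mu1 i) + (tnth mu1 i - tnth mu0 i) by ring.
  set vi := tnth mu1 i - tnth mu0 i; set wi := tnth mu i - tnth mu1 i.
  have h : 0 <= l * (vi / 2 + wi) ^+ 2 by rewrite mulr_ge0 ?sqr_ge0.
  nra.
have -> : \sum_(i < n) tnth v i ^+ 2 = V2 by rewrite V2E; apply: eq_bigr => i _; rewrite tv.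
rewrite -WE /l.
have h1 : 0 <= u * (V2 - 3/4 * n%:R * a^+2) by rewrite mulr_ge0 ?subr_ge0 // ltW.
have h2 : 0 <= u * n%:R * a^+2 by rewrite !mulr_ge0 ?sqr_ge0 // ltW.
have h3 : 0 <= u * (n%:R * (a / 6) ^+ 2 - W) by rewrite mulr_ge0 ?subr_ge0 // ltW.
have h5 : u ^+ 2 * sig ^+ 2 <= 4 * u.
  have := ler_wpM2l (sqr_ge0 u) hsig.
  have -> : u ^+ 2 * (4 * s ^+ 2) = 4 * (u ^+ 2 * s ^+ 2) by ring.
  by rewrite hus.
have h4 : 0 <= (4 * u - u ^+ 2 * sig ^+ 2) * V2 by rewrite mulr_ge0 // subr_ge0.
lra.
Qed.
End CA.
Section CB1.
Context {R : realType}.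

Lemma caseB1 n (mu0 mu1 : n.-tuple R) (s t a : R) :
  (1 <= n)%N -> 0 < s -> 0 < a -> a < s -> s + a / 2 < t ->
  exists phi : n.-tuple R -> R,
    measurable_fun [set: n.-tuple R] phi /\
    (forall y, phi y = 0 \/ phi y = 1) /\
    (gauss_expect mu0 s (fun y => (phi y)%:E)
       <= (expR (- (1/1000 * n%:R * a ^+ 2 / s ^+ 2)))%:E)%E /\
    (forall (mu : n.-tuple R) (sigma : R), 0 < sigma ->
       dist_ms mu sigma mu1 t <= a / 6 ->
       (gauss_expect mu sigma (fun y => (1 - phi y)%:E)
          <= (expR (- (1/1000 * n%:R * a ^+ 2 / s ^+ 2)))%:E)%E).
Proof.
move=> n1 s0 a0 as0 ht.
have n0 : 0 < n%:R :> R by rewrite ltr0n.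
have [x xE] : exists x, x = a / s by eexists.
have x0 : 0 < x by rewrite xE divr_gt0.
have x1 : x < 1 by rewrite xE ltr_pdivrMr // mul1r.
have ax : a = x * s by rewrite xE divfK // gt_eqF.
have s2 : 0 < s ^+ 2 by rewrite exprn_gt0.
have hK : 1/1000 * n%:R * a ^+ 2 / s ^+ 2 = 1/1000 * n%:R * x ^+ 2.
  by rewrite ax; field; rewrite gt_eqF.
rewrite hK.
set z := [tuple (0 : R) | i < n].
have tz i : tnth z i = 0 by rewrite tnth_mktuple.
pose T := n%:R * (s ^+ 2 + a * s / 3).
exists (ind 1 z mu0 T); split; first exact: measurable_ind.
split; first by move=> y; exact: ind01.
split.
- pose l := x / (24 * s ^+ 2).
  have l0 : 0 <= l by rewrite /l; apply: divr_ge0; [exact: ltW | apply: mulr_ge0 => //; exact: ltW].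
  have ls : l * s ^+ 2 = x / 24 by rewrite /l; field; rewrite gt_eqF.
  pose r := 1 - 2 * (l * 1) * s ^+ 2.
  have rE : r = 1 - x / 12 by rewrite /r mulr1 -mulrA ls; field.
  have r0 : 0 < r by rewrite rE; lra.
  apply: le_trans (@chernoff R n mu0 mu0 z s 1 l (l * T) _ s0 r0 _ _) _.
  + by move=> y; exact: ind_ge0.
  + by move=> y; apply: ind_le.
  rewrite lee_fin; apply: (@fin_exp R n _ (fun i => l * s ^+ 2 / r + l * 0 ^+ 2 / r)).
  + by move=> i; exact: mgf_ge0.
  + move=> i; rewrite tz subrr mulr0 mulr1.
    have := @mgf_b0 R l 0 s s0; rewrite /r mulr1 in r0 => /(_ r0).
    by rewrite /r mulr1.
  rewrite sumr_const card_ord -[(_ + _) *+ n]mulr_natr.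
  have lT : l * T = n%:R * (x / 24 + x ^+ 2 / 72).
    by rewrite /T ax /l; field; rewrite gt_eqF.
  have hQ : l * s ^+ 2 / r <= x / 24 + x ^+ 2 / 264.
    rewrite ls rE ler_pdivrMr; last by lra.
    have : 0 <= x ^+ 2 * (1 - x) by rewrite mulr_ge0 ?sqr_ge0 // subr_ge0 ltW.
    lra.
  rewrite expr0n /= mulr0 mul0r addr0 lT.
  move: hQ; set Q := l * s ^+ 2 / r => hQ.
  have h1 : 0 <= (x / 24 + x ^+ 2 / 264 - Q) * n%:R by rewrite mulr_ge0 ?subr_ge0 // ltW.
  have h2 : 0 <= n%:R * x ^+ 2 by rewrite mulr_ge0 ?sqr_ge0 // ltW.
  lra.
move=> mu sig sig0 hdist.
have [hW hst] := @alt_conv R n mu mu1 sig t a n1 hdist.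
have hsig : s * (1 + x / 3) < sig.
  have h1 : t - a / 6 <= sig.
    rewrite leNgt; apply/negP => h.
    have h2 : a / 6 < t - sig by lra.
    have h3 : (a / 6) ^+ 2 < (t - sig) ^+ 2 by rewrite ltr_pXn2r // ?nnegrE; lra.
    have : (t - sig) ^+ 2 = (sig - t) ^+ 2 by ring.
    lra.
  rewrite ax in ht h1; lra.
have sg2 : 0 < sig ^+ 2 by rewrite exprn_gt0.
pose l := x / 20 / sig ^+ 2.
have l0 : 0 <= l by rewrite /l; apply: divr_ge0; [apply: divr_ge0 => //; exact: ltW | exact: ltW].
have ls : l * sig ^+ 2 = x / 20 by rewrite /l; field; rewrite gt_eqF.
pose r := 1 - 2 * (- l * 1) * sig ^+ 2.
have rE : r = 1 + x / 10 by rewrite /r mulr1 mulrN mulNr -mulrA ls; field.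
have r0 : 0 < r by rewrite rE; lra.
apply: le_trans (@chernoff R n mu mu0 z sig 1 (- l) (- l * T) _ sig0 r0 _ _) _.
+ by move=> y; rewrite subr_ge0; exact: ind_le1.
+ by move=> y; apply: indc_le.
rewrite lee_fin; apply: (@fin_exp R n _ (fun i => - l * sig ^+ 2 / r + - l * (tnth mu i - tnth mu0 i) ^+ 2 / r)).
+ by move=> i; exact: mgf_ge0.
+ move=> i; rewrite tz mulr0 mulr1.
  have := @mgf_b0 R (- l) (tnth mu i - tnth mu0 i) sig sig0; rewrite /r mulr1 in r0 => /(_ r0).
  by rewrite /r mulr1.
have hs := @sum_le_lin R n (fun i => - l * sig ^+ 2 / r + - l * (tnth mu i - tnth mu0 i) ^+ 2 / r) (fun _ => 0) (fun _ => 0) 0 0 (- l * sig ^+ 2 / r).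
apply: le_trans (lerD (lexx _) (hs _)) _.
  move=> i; rewrite !mul0r !addr0 add0r gerDl.
  rewrite !mulNr oppr_le0; apply: divr_ge0; [apply: mulr_ge0 => //; exact: sqr_ge0 | exact: ltW].
rewrite !mul0r !add0r.
have hQ : - l * sig ^+ 2 / r <= - (x / 20) + x ^+ 2 / 200.
  have -> : - l * sig ^+ 2 / r = - ((x / 20) / (1 + x / 10)).
    by rewrite -ls -rE mulNr mulNr.
  have : x / 20 - x ^+ 2 / 200 <= (x / 20) / (1 + x / 10).
    rewrite ler_pdivlMr; last by lra.
    have : 0 <= x ^+ 3 by rewrite exprn_ge0 // ltW.
    lra.
  lra.
have lT : - l * T = - (n%:R * (x / 20) * (s ^+ 2 * (1 + x / 3) / sig ^+ 2)).
  by rewrite /T ax /l; field; rewrite !gt_eqF.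
have hP : s ^+ 2 * (1 + x / 3) / sig ^+ 2 <= 1 - x / 5.
  rewrite ler_pdivrMr //.
  have h1 : (s * (1 + x / 3)) ^+ 2 <= sig ^+ 2.
    have hs1 : 0 <= s * (1 + x / 3) by apply: mulr_ge0; lra.
    rewrite ler_pXn2r // ?nnegrE; lra.
  have h2 : 0 <= x * (2 - x) by rewrite mulr_ge0 ?ltW //; lra.
  have h3 : 0 <= s ^+ 2 * (1 + x / 3) * (x * (2 - x)) by rewrite !mulr_ge0 ?sqr_ge0 //; lra.
  have h4 : 0 <= (1 - x / 5) * (sig ^+ 2 - (s * (1 + x / 3)) ^+ 2) by rewrite mulr_ge0 ?subr_ge0 //; lra.
  lra.
rewrite lT opprK.
move: hQ hP; set Q := - l * sig ^+ 2 / r; set P := s ^+ 2 * (1 + x / 3) / sig ^+ 2 => hQ hP.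
have h1 : 0 <= (1 - x / 5 - P) * (n%:R * x) by rewrite !mulr_ge0 ?subr_ge0 // ltW.
have h2 : 0 <= (- (x / 20) + x ^+ 2 / 200 - Q) * n%:R by rewrite mulr_ge0 ?subr_ge0 // ltW.
have h3 : 0 <= n%:R * x ^+ 2 by rewrite mulr_ge0 ?sqr_ge0 // ltW.
lra.
Qed.
End CB1.
Section CB2.
Context {R : realType}.

Lemma caseB2 n (mu0 mu1 : n.-tuple R) (s t a : R) :
  (1 <= n)%N -> 0 < s -> 0 < a -> a < s -> t + a / 2 < s ->
  exists phi : n.-tuple R -> R,
    measurable_fun [set: n.-tuple R] phi /\
    (forall y, phi y = 0 \/ phi y = 1) /\
    (gauss_expect mu0 s (fun y => (phi y)%:E)
       <= (expR (- (1/1000 * n%:R * a ^+ 2 / s ^+ 2)))%:E)%E /\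
    (forall (mu : n.-tuple R) (sigma : R), 0 < sigma ->
       dist_ms mu sigma mu1 t <= a / 6 ->
       (gauss_expect mu sigma (fun y => (1 - phi y)%:E)
          <= (expR (- (1/1000 * n%:R * a ^+ 2 / s ^+ 2)))%:E)%E).
Proof.
move=> n1 s0 a0 as0 ht.
have n0 : 0 < n%:R :> R by rewrite ltr0n.
have [x xE] : exists x, x = a / s by eexists.
have x0 : 0 < x by rewrite xE divr_gt0.
have x1 : x < 1 by rewrite xE ltr_pdivrMr // mul1r.
have ax : a = x * s by rewrite xE divfK // gt_eqF.
have s2 : 0 < s ^+ 2 by rewrite exprn_gt0.
have hK : 1/1000 * n%:R * a ^+ 2 / s ^+ 2 = 1/1000 * n%:R * x ^+ 2.
  by rewrite ax; field; rewrite gt_eqF.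
rewrite hK.
set z := [tuple (0 : R) | i < n].
have tz i : tnth z i = 0 by rewrite tnth_mktuple.
pose T := n%:R * (s ^+ 2 - a * s / 4).
exists (fun y => 1 - ind 1 z mu1 T y); split.
  by apply: measurable_funB => //; exact: measurable_ind.
split; first by move=> y; case: (@ind01 R n 1 z mu1 T y) => ->; [right|left]; rewrite ?subr0 ?subrr.
split.
- pose l := x / (16 * s ^+ 2).
  have l0 : 0 <= l by rewrite /l; apply: divr_ge0; [exact: ltW | apply: mulr_ge0 => //; exact: ltW].
  have ls : l * s ^+ 2 = x / 16 by rewrite /l; field; rewrite gt_eqF.
  pose r := 1 - 2 * (- l * 1) * s ^+ 2.
  have rE : r = 1 + x / 8 by rewrite /r mulr1 mulrN mulNr -mulrA ls; field.
  have r0 : 0 < r by rewrite rE; lra.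
  apply: le_trans (@chernoff R n mu0 mu1 z s 1 (- l) (- l * T) _ s0 r0 _ _) _.
  + by move=> y; rewrite subr_ge0; exact: ind_le1.
  + by move=> y; apply: indc_le.
  rewrite lee_fin; apply: (@fin_exp R n _ (fun i => - l * s ^+ 2 / r + - l * (tnth mu0 i - tnth mu1 i) ^+ 2 / r)).
  + by move=> i; exact: mgf_ge0.
  + move=> i; rewrite tz mulr0 mulr1.
    have := @mgf_b0 R (- l) (tnth mu0 i - tnth mu1 i) s s0; rewrite /r mulr1 in r0 => /(_ r0).
    by rewrite /r mulr1.
  have hs := @sum_le_lin R n (fun i => - l * s ^+ 2 / r + - l * (tnth mu0 i - tnth mu1 i) ^+ 2 / r) (fun _ => 0) (fun _ => 0) 0 0 (- l * s ^+ 2 / r).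
  apply: le_trans (lerD (lexx _) (hs _)) _.
    move=> i; rewrite !mul0r !addr0 add0r gerDl.
    rewrite !mulNr oppr_le0; apply: divr_ge0; [apply: mulr_ge0 => //; exact: sqr_ge0 | exact: ltW].
  rewrite !mul0r !add0r.
  have hQ : - l * s ^+ 2 / r <= - (x / 16) + x ^+ 2 / 128.
    have -> : - l * s ^+ 2 / r = - ((x / 16) / (1 + x / 8)).
      by rewrite -ls -rE mulNr mulNr.
    have : x / 16 - x ^+ 2 / 128 <= (x / 16) / (1 + x / 8).
      rewrite ler_pdivlMr; last by lra.
      have : 0 <= x ^+ 3 by rewrite exprn_ge0 // ltW.
      lra.
    lra.
  have lT : - l * T = - (n%:R * (x / 16 - x ^+ 2 / 64)).
    by rewrite /T ax /l; field; rewrite !gt_eqF.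
  rewrite lT opprK.
  move: hQ; set Q := - l * s ^+ 2 / r => hQ.
  have h2 : 0 <= (- (x / 16) + x ^+ 2 / 128 - Q) * n%:R by rewrite mulr_ge0 ?subr_ge0 // ltW.
  have h3 : 0 <= n%:R * x ^+ 2 by rewrite mulr_ge0 ?sqr_ge0 // ltW.
  lra.
move=> mu sig sig0 hdist.
have [hW hst] := @alt_conv R n mu mu1 sig t a n1 hdist.
have [W WE] : exists W, W = \sum_(i < n) (tnth mu i - tnth mu1 i) ^+ 2 by eexists.
rewrite -WE in hW.
have W0 : 0 <= W by rewrite WE; apply: sumsq_ge0.
have hsig : sig < s * (1 - x / 3).
  have h1 : sig <= t + a / 6.
    rewrite leNgt; apply/negP => h.
    have h2 : a / 6 < sig - t by lra.
    have h3 : (a / 6) ^+ 2 < (sig - t) ^+ 2 by rewrite ltr_pXn2r // ?nnegrE; lra.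
    lra.
  rewrite ax in ht h1; lra.
pose l := x / (32 * s ^+ 2).
have l0 : 0 <= l by rewrite /l; apply: divr_ge0; [exact: ltW | apply: mulr_ge0 => //; exact: ltW].
have [P PE] : exists P, P = l * sig ^+ 2 by eexists.
have P0 : 0 <= P by rewrite PE mulr_ge0 // sqr_ge0.
have hP1 : P <= x / 32 * (1 - x / 3) ^+ 2.
  have h1 : sig ^+ 2 <= (s * (1 - x / 3)) ^+ 2.
    have hs1 : 0 <= s * (1 - x / 3) by apply: mulr_ge0; lra.
    rewrite ler_pXn2r // ?nnegrE; lra.
  rewrite PE /l.
  have -> : x / 32 * (1 - x / 3) ^+ 2 = x / (32 * s ^+ 2) * (s * (1 - x / 3)) ^+ 2.
    by field; rewrite gt_eqF.
  by rewrite ler_wpM2l.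
have hP2 : P <= x / 32.
  have : 0 <= x ^+ 2 * (6 - x) by rewrite mulr_ge0 ?sqr_ge0 //; lra.
  lra.
pose r := 1 - 2 * (l * 1) * sig ^+ 2.
have rE : r = 1 - 2 * P by rewrite /r mulr1 -mulrA PE.
have r0 : 0 < r by rewrite rE; lra.
have -> : (fun y => (1 - (1 - ind 1 z mu1 T y))%:E) = (fun y => (ind 1 z mu1 T y)%:E).
  by apply: funext => y; rewrite subKr.
apply: le_trans (@chernoff R n mu mu1 z sig 1 l (l * T) (ind 1 z mu1 T) sig0 r0 _ _) _.
+ by move=> y; exact: ind_ge0.
+ by move=> y; apply: ind_le.
rewrite lee_fin; apply: (@fin_exp R n _ (fun i => l * sig ^+ 2 / r + l * (tnth mu i - tnth mu1 i) ^+ 2 / r)).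
+ by move=> i; exact: mgf_ge0.
+ move=> i; rewrite tz mulr0 mulr1.
  have := @mgf_b0 R l (tnth mu i - tnth mu1 i) sig sig0; rewrite /r mulr1 in r0 => /(_ r0).
  by rewrite /r mulr1.
have hs := @sum_le_lin R n (fun i => l * sig ^+ 2 / r + l * (tnth mu i - tnth mu1 i) ^+ 2 / r) (fun i => (tnth mu i - tnth mu1 i) ^+ 2) (fun _ => 0) (16 / 15 * l) 0 (P + 4 * P ^+ 2).
apply: le_trans (lerD (lexx _) (hs _)) _.
  move=> i; rewrite mul0r addr0 -PE rE addrC.
  apply: lerD.
  - rewrite ler_pdivrMr; last by lra.
    have hL : 0 <= l * (tnth mu i - tnth mu1 i) ^+ 2 by rewrite mulr_ge0 // sqr_ge0.
    have : 0 <= l * (tnth mu i - tnth mu1 i) ^+ 2 * (1 - 32 * P) by rewrite mulr_ge0 //; lra.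
    lra.
  - rewrite ler_pdivrMr; last by lra.
    have : 0 <= P ^+ 2 * (1 - 4 * P) by rewrite mulr_ge0 ?sqr_ge0 //; lra.
    lra.
rewrite -WE mul0r addr0.
have lT : l * T = n%:R * (x / 32 - x ^+ 2 / 128).
  by rewrite /T ax /l; field; rewrite !gt_eqF.
have hlW : l * W <= n%:R * x ^+ 3 / 1152.
  have : l * W <= l * (n%:R * (a / 6) ^+ 2) by rewrite ler_wpM2l.
  have -> : l * (n%:R * (a / 6) ^+ 2) = n%:R * x ^+ 3 / 1152.
    by rewrite /l ax; field; rewrite gt_eqF.
  done.
rewrite lT.
have h1 : 0 <= (x / 32 * (1 - x / 3) ^+ 2 - P) * n%:R by rewrite mulr_ge0 ?subr_ge0 // ltW.
have h2 : 0 <= (x / 32 - P) * (P * n%:R) by rewrite !mulr_ge0 ?subr_ge0 // ltW.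
have h3 : 0 <= (x / 32 - P) * (x * n%:R) by rewrite !mulr_ge0 ?subr_ge0 // ltW.
have h4 : 0 <= (x ^+ 2 - x ^+ 3) * n%:R.
  apply: mulr_ge0; last exact: ltW.
  have -> : x ^+ 2 - x ^+ 3 = x ^+ 2 * (1 - x) by ring.
  by rewrite mulr_ge0 ?sqr_ge0 // subr_ge0 ltW.
have h5 : 0 <= n%:R * x ^+ 2 by rewrite mulr_ge0 ?sqr_ge0 // ltW.
lra.
Qed.
End CB2.

Theorem theorem1 (R : realType) :
  exists K : R, 0 < K /\
  forall (n : nat) (mu0 : n.-tuple R) (sigma0 eps : R) (mu1 : n.-tuple R) (sigma1 : R),
    (1 <= n)%N -> 0 < sigma0 -> 0 < eps -> eps < sigma0 -> 0 < sigma1 ->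
    eps <= dist_ms mu1 sigma1 mu0 sigma0 ->
    exists phi : n.-tuple R -> R,
      measurable_fun [set: n.-tuple R] phi /\
      (forall y, phi y = 0 \/ phi y = 1) /\
      (gauss_expect mu0 sigma0 (fun y => (phi y)%:E)
         <= (expR (- (K * n%:R * eps ^+ 2 / sigma0 ^+ 2)))%:E)%E /\
      (forall (mu : n.-tuple R) (sigma : R), 0 < sigma ->
         dist_ms mu sigma mu1 sigma1 <= eps / 6 ->
         (gauss_expect mu sigma (fun y => (1 - phi y)%:E)
            <= (expR (- (K * n%:R * eps ^+ 2 / sigma0 ^+ 2)))%:E)%E).
Proof.
exists (1/1000); split; first lra.
move=> n mu0 s a mu1 t n1 s0 a0 as0 t0 hdist.
have hd := @null_conv R n mu0 mu1 s t a n1 a0 hdist.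
case: (lerP ((t - s) ^+ 2) (a ^+ 2 / 4)) => hc.
  exact: caseA.
case: (ltrP s t) => hst.
- apply: caseB1 => //.
  have h : (a / 2) ^+ 2 < (t - s) ^+ 2 by lra.
  move: h; rewrite ltr_pXn2r // ?nnegrE; lra.
- apply: caseB2 => //.
  have h : (a / 2) ^+ 2 < (s - t) ^+ 2.
    have -> : (s - t) ^+ 2 = (t - s) ^+ 2 by ring.
    lra.
  move: h; rewrite ltr_pXn2r // ?nnegrE; lra.
Qed.
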